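(* For every $x\in\mathbb R$, $|e^{ix}-1-ix-(ix)^2/2|\le\varkappa x^2$, where $\varkappa=x^{-2}\sqrt{(\cos x-1+x^2/2)^2+(\sin x-x)^2}\big|_{x=x_0}=0.531551\ldots$ and $x_0=5.487414\ldots$ is the unique root of $8(\cos x-1)+8x\sin x-4x^2\cos x-x^3\sin x=0$ on $(0,2\pi]$, which lies in $(\pi,2\pi)$. *)

(* Defs.v *)
From Stdlib Require Import Reals.
From Coquelicot Require Import Coquelicot.
Open Scope R_scope.

Definition cexpi (x : R) : C := (cos x, sin x).

Definition g (x : R) : R :=
  8 * (cos x - 1) + 8 * x * sin x - 4 * x ^ 2 * cos x - x ^ 3 * sin x.

Definition kappa_at (x : R) : R :=
  / (x ^ 2) * sqrt ((cos x - 1 + x ^ 2 / 2) ^ 2 + (sin x - x) ^ 2).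

(* Main.v *)
Require Import Defs.
From Stdlib Require Import Reals Lra Lia Psatz ZArith.
From Coquelicot Require Import Coquelicot.
Open Scope R_scope.

Fixpoint zfact (n : nat) : Z := match n with O => 1%Z | S m => (Z.of_nat (S m) * zfact m)%Z end.
Lemma INR_fact_Z n : INR (fact n) = IZR (zfact n).
Proof. induction n as [|n IH]. reflexivity.
 change (zfact (S n)) with (Z.of_nat (S n) * zfact n)%Z. rewrite fact_simpl, mult_INR, mult_IZR, IH, <- INR_IZR_INZ. reflexivity. Qed.
Lemma cos_approx_Z a n : cos_approx a n = sum_f_R0 (fun i => (-1)^i * (a^(2*i)/IZR(zfact(2*i)))) n.
Proof. apply sum_eq; intros; unfold cos_term; rewrite INR_fact_Z; reflexivity. Qed.
Lemma sin_approx_Z a n : sin_approx a n = sum_f_R0 (fun i => (-1)^i * (a^(2*i+1)/IZR(zfact(2*i+1)))) n.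
Proof. apply sum_eq; intros; unfold sin_term; rewrite INR_fact_Z; reflexivity. Qed.
Lemma mulb x y a1 a2 b1 b2 : a1 <= x <= a2 -> b1 <= y <= b2 -> 0 <= a1 -> 0 <= b1 -> a1*b1 <= x*y <= a2*b2.
Proof. intros. split; apply Rmult_le_compat; lra. Qed.
Definition a := 5487414/1000000.
Definition b := 5487415/1000000.

Lemma num_a : (6997339496670379/10000000000000000) <= cos a <= (3498669748335199/5000000000000000) /\ (-7144035272052953/10000000000000000) <= sin a <= (-7144035272052941/10000000000000000).
Proof.
  assert (HP := PI2_3_2).
  assert (Hc: (988165599224117/5000000000000000) <= cos (a/4) <= (395266239689647/2000000000000000)).
  { destruct (cos_bound (a/4) 7) as [H1 H2]; [unfold a; lra|unfold a; lra|].
    rewrite cos_approx_Z in H1,H2. cbv -[IZR Rmult Rplus Rminus Rdiv Rinv Ropp pow a cos sin Rle Rlt] in H1,H2.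
    unfold a in *; split; lra. }
  assert (Hs: (9802760580267181/10000000000000000) <= sin (a/4) <= (4901380290133591/5000000000000000)).
  { destruct (sin_bound (a/4) 7) as [H1 H2]; [unfold a; lra|unfold a; lra|].
    rewrite sin_approx_Z in H1,H2. cbv -[IZR Rmult Rplus Rminus Rdiv Rinv Ropp pow a cos sin Rle Rlt] in H1,H2.
    unfold a in *; split; lra. }
  assert (H2s: (968675078285027/2500000000000000) <= sin (2*(a/4)) <= (242168769571257/625000000000000)).
  { rewrite sin_2a. pose proof (mulb (sin (a/4)) (cos (a/4)) _ _ _ _ Hs Hc ltac:(lra) ltac:(lra)). split; lra. }
  assert (H2c: (-2304705749702009/2500000000000000) <= cos (2*(a/4)) <= (-9218822998808031/10000000000000000)).
  { rewrite cos_2a_sin. pose proof (mulb (sin (a/4)) (sin (a/4)) _ _ _ _ Hs Hs ltac:(lra) ltac:(lra)). split; lra. }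
  assert (Hn: - (-9218822998808031/10000000000000000) <= - cos (2*(a/4)) <= - (-2304705749702009/2500000000000000)) by lra.
  assert (H4s: (-7144035272052953/10000000000000000) <= sin (2*(2*(a/4))) <= (-7144035272052941/10000000000000000)).
  { rewrite (sin_2a (2*(a/4))). pose proof (mulb (sin (2*(a/4))) (- cos (2*(a/4))) _ _ _ _ H2s Hn ltac:(lra) ltac:(lra)). split; lra. }
  assert (H4c: (6997339496670379/10000000000000000) <= cos (2*(2*(a/4))) <= (3498669748335199/5000000000000000)).
  { rewrite (cos_2a_cos (2*(a/4))). pose proof (mulb (- cos (2*(a/4))) (- cos (2*(a/4))) _ _ _ _ Hn Hn ltac:(lra) ltac:(lra)). split; lra. }
  replace (2*(2*(a/4))) with a in * by field. split; assumption.
Qed.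

Lemma num_b : (1749336660175537/2500000000000000) <= cos b <= (6997346640702167/10000000000000000) /\ (-7144028274709881/10000000000000000) <= sin b <= (-7144028274709871/10000000000000000).
Proof.
  assert (HP := PI2_3_2).
  assert (Hc: (1976328747758027/10000000000000000) <= cos (b/4) <= (494082186939507/2500000000000000)).
  { destruct (cos_bound (b/4) 7) as [H1 H2]; [unfold b; lra|unfold b; lra|].
    rewrite cos_approx_Z in H1,H2. cbv -[IZR Rmult Rplus Rminus Rdiv Rinv Ropp pow b cos sin Rle Rlt] in H1,H2.
    unfold b in *; split; lra. }
  assert (Hs: (4901380537174837/5000000000000000) <= sin (b/4) <= (392110442973987/400000000000000)).
  { destruct (sin_bound (b/4) 7) as [H1 H2]; [unfold b; lra|unfold b; lra|].
    rewrite sin_approx_Z in H1,H2. cbv -[IZR Rmult Rplus Rminus Rdiv Rinv Ropp pow b cos sin Rle Rlt] in H1,H2.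
    unfold b in *; split; lra. }
  assert (H2s: (968673925932031/2500000000000000) <= sin (2*(b/4)) <= (3874695703728127/10000000000000000)).
  { rewrite sin_2a. pose proof (mulb (sin (b/4)) (cos (b/4)) _ _ _ _ Hs Hc ltac:(lra) ltac:(lra)). split; lra. }
  assert (H2c: (-9218824936157039/10000000000000000) <= cos (2*(b/4)) <= (-4609412468078517/5000000000000000)).
  { rewrite cos_2a_sin. pose proof (mulb (sin (b/4)) (sin (b/4)) _ _ _ _ Hs Hs ltac:(lra) ltac:(lra)). split; lra. }
  assert (Hn: - (-4609412468078517/5000000000000000) <= - cos (2*(b/4)) <= - (-9218824936157039/10000000000000000)) by lra.
  assert (H4s: (-7144028274709881/10000000000000000) <= sin (2*(2*(b/4))) <= (-7144028274709871/10000000000000000)).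
  { rewrite (sin_2a (2*(b/4))). pose proof (mulb (sin (2*(b/4))) (- cos (2*(b/4))) _ _ _ _ H2s Hn ltac:(lra) ltac:(lra)). split; lra. }
  assert (H4c: (1749336660175537/2500000000000000) <= cos (2*(2*(b/4))) <= (6997346640702167/10000000000000000)).
  { rewrite (cos_2a_cos (2*(b/4))). pose proof (mulb (- cos (2*(b/4))) (- cos (2*(b/4))) _ _ _ _ Hn Hn ltac:(lra) ltac:(lra)). split; lra. }
  replace (2*(2*(b/4))) with b in * by field. split; assumption.
Qed.

Definition kk x := sin x - x * cos x.
Definition F2 x := x^4/4 + (x^2-2)*cos x + 2 - 2*x*sin x.
Definition hk x := F2 x / x^4.

Lemma D_kk x : derivable_pt_lim kk x (x * sin x).
Proof. apply is_derive_Reals. unfold kk. auto_derive; auto. ring. Qed.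
Lemma D_g x : derivable_pt_lim g x (x^2 * kk x).
Proof. apply is_derive_Reals. unfold g, kk. auto_derive; auto. ring. Qed.
Lemma D_hk x : x <> 0 -> derivable_pt_lim hk x (g x / x^5).
Proof. intro H. apply is_derive_Reals. unfold hk, F2, g. auto_derive.
 - intro E. apply H. destruct (Req_dec x 0) as [|Hx]; auto. exfalso. assert (0 < x*x) by (apply Rsqr_pos_lt; auto). nra.
 - field; auto. Qed.

Lemma cont_of_der f f' : (forall x, derivable_pt_lim f x (f' x)) -> continuity f.
Proof. intros H x. apply derivable_continuous_pt. exists (f' x). apply H. Qed.

Lemma PI_bounds : 3 < PI < 347/100.
Proof. split. pose proof PI2_3_2; lra.
 destruct (PI_ineq 1) as [_ H]. unfold tg_alt, PI_tg in H. simpl in H. lra. Qed.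

Lemma g0 : g 0 = 0.
Proof. unfold g. rewrite cos_0, sin_0. ring. Qed.
Lemma gPI : g PI = 4*PI^2 - 16.
Proof. unfold g. rewrite cos_PI, sin_PI. ring. Qed.
Lemma g2PI : g (2*PI) = -16*PI^2.
Proof. unfold g. rewrite cos_2PI, sin_2PI. ring. Qed.

Lemma k_pos x : 0 < x <= PI -> 0 < kk x.
Proof. intros [H1 H2].
 destruct (MVT_cor2 kk (fun x => x * sin x) 0 x H1 (fun c _ => D_kk c)) as [c [E Hc]].
 assert (kk 0 = 0) by (unfold kk; rewrite sin_0, cos_0; ring).
 assert (0 < sin c) by (apply sin_gt_0; lra).
 assert (0 < c * sin c) by (apply Rmult_lt_0_compat; lra).
 assert (0 < c * sin c * (x - 0)) by (apply Rmult_lt_0_compat; lra). lra. Qed.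

Lemma g_pos x : 0 < x <= PI -> 0 < g x.
Proof. intros [H1 H2].
 destruct (MVT_cor2 g (fun x => x^2 * kk x) 0 x H1 (fun c _ => D_g c)) as [c [E Hc]].
 rewrite g0 in E.
 assert (0 < kk c) by (apply k_pos; lra).
 assert (0 < c^2) by (apply pow_lt; lra).
 assert (0 < c^2 * kk c) by (apply Rmult_lt_0_compat; lra).
 assert (0 < c^2 * kk c * (x - 0)) by (apply Rmult_lt_0_compat; lra). lra. Qed.

Lemma k_dec u v : PI <= u -> u <= v -> v <= 2*PI -> kk v <= kk u.
Proof. intros H1 H2 H3. destruct (Rle_lt_or_eq_dec u v H2) as [H|H]; [|subst; lra].
 destruct (MVT_cor2 kk (fun x => x * sin x) u v H (fun c _ => D_kk c)) as [c [E Hc]].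
 assert (sin c <= 0) by (apply sin_le_0; lra).
 assert (0 <= c * (- sin c)) by (apply Rmult_le_pos; lra).
 assert (0 <= c * (- sin c) * (v - u)) by (apply Rmult_le_pos; lra). lra. Qed.

Lemma uniq2 y1 y2 : 0 < y1 -> y1 < y2 -> y2 <= 2*PI -> g y1 = 0 -> g y2 = 0 -> False.
Proof. intros H1 H2 H3 G1 G2. pose proof PI_bounds.
 assert (PI < y1). { destruct (Rlt_or_le PI y1) as [h|h]; auto. pose proof (g_pos y1 (conj H1 h)). lra. }
 destruct (MVT_cor2 g (fun x => x^2 * kk x) PI y1 H0 (fun c _ => D_g c)) as [c1 [E1 Hc1]].
 destruct (MVT_cor2 g (fun x => x^2 * kk x) y1 y2 H2 (fun c _ => D_g c)) as [c2 [E2 Hc2]].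
 rewrite gPI in E1.
 assert (kk c1 < 0).
 { destruct (Rlt_or_le (kk c1) 0) as [h|h]; auto.
   assert (0 <= c1^2 * kk c1 * (y1 - PI)). { apply Rmult_le_pos; [apply Rmult_le_pos|]; try lra. apply pow2_ge_0. }
   nra. }
 assert (kk c2 = 0).
 { rewrite G1, G2 in E2. assert (0 < c2^2) by (apply pow_lt; lra).
   symmetry in E2. replace (0 - 0) with 0 in E2 by ring.
   destruct (Rmult_integral _ _ E2) as [h|h]; [|lra].
   destruct (Rmult_integral _ _ h) as [h'|h']; [lra|auto]. }
 pose proof (k_dec c1 c2 ltac:(lra) ltac:(lra) ltac:(lra)). lra. Qed.

Lemma contg : continuity g.
Proof. apply (cont_of_der g (fun x => x^2 * kk x)). apply D_g. Qed.

Lemma contng : continuity (opp_fct g).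
Proof. apply continuity_opp, contg. Qed.

Lemma Fsq_F2 x : (cos x - 1 + x^2/2)^2 + (sin x - x)^2 = F2 x.
Proof. pose proof (sin2_cos2 x) as H. unfold Rsqr in H.
 transitivity (F2 x + (sin x * sin x + cos x * cos x - 1)). unfold F2. field. rewrite H. ring. Qed.

Lemma F2_even x : F2 (-x) = F2 x.
Proof. unfold F2. rewrite cos_neg, sin_neg. field. Qed.

Lemma cmod_eq x : Cmod (cexpi x - 1 - (Ci * RtoC x)%C - ((Ci * RtoC x) ^ 2 / 2)%C) = sqrt (F2 x).
Proof. rewrite <- Fsq_F2. unfold Cmod. apply f_equal. unfold cexpi. simpl. field. Qed.

Lemma big_t K t : 2825/10000 <= K -> 6 <= t -> F2 t <= K * t^4.
Proof. intros HK Ht. unfold F2.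
 pose proof (sin2_cos2 t) as H. unfold Rsqr in H.
 set (c := cos t) in *. set (s := sin t) in *.
 set (u := (t^2-2)*c - 2*t*s).
 assert (Hu : u^2 + ((t^2-2)*s + 2*t*c)^2 = t^4 + 4).
 { transitivity (((t^2-2)^2 + 4*t^2)*(s*s+c*c)). unfold u; ring. rewrite H. ring. }
 assert (Hu2 : u^2 <= t^4 + 4) by (pose proof (pow2_ge_0 ((t^2-2)*s + 2*t*c)); lra).
 set (T := t^4) in *.
 assert (HT : 1296 <= T). { unfold T. assert (36 <= t^2) by nra. nra. }
 set (R0 := 325/10000 * T - 2).
 assert (0 < R0) by (unfold R0; lra).
 assert (T + 4 < R0^2) by (unfold R0; nra).
 assert (u < R0). { destruct (Rlt_or_le u R0) as [h|h]; auto. nra. }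
 assert (K * T >= 2825/10000 * T) by nra.
 replace ((t^2-2)*c) with (u + 2*t*s) by (unfold u; ring).
 unfold R0 in *. lra. Qed.

Theorem lemma3 :
  exists x0 : R,
    (0 < x0 <= 2 * PI /\ g x0 = 0 /\
     (forall y : R, 0 < y <= 2 * PI -> g y = 0 -> y = x0)) /\
    (PI < x0 < 2 * PI) /\
    (5487414 / 1000000 <= x0 < 5487415 / 1000000) /\
    (531551 / 1000000 <= kappa_at x0 < 531552 / 1000000) /\
    (forall x : R,
       Cmod (cexpi x - 1 - (Ci * RtoC x)%C - ((Ci * RtoC x) ^ 2 / 2)%C)
         <= kappa_at x0 * x ^ 2).
Proof.
 pose proof PI_bounds as HPI.
 destruct num_a as [[Ca1 Ca2] [Sa1 Sa2]].
 destruct num_b as [[Cb1 Cb2] [Sb1 Sb2]].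
 assert (Ga : 0 < g a /\ g a <= 1/10000) by (unfold g; unfold a in *; split; lra).
 assert (Gb : g b < 0) by (unfold g; unfold b in *; lra).
 assert (Ka : kk a < 0) by (unfold kk; unfold a in *; lra).
 assert (Hab : a < b) by (unfold a, b; lra).
 assert (HbPI : b < 2*PI) by (unfold b; lra).
 assert (HaPI : PI < a) by (unfold a; lra).
 destruct (IVT (opp_fct g) a b contng Hab) as [x0 [[Hx1 Hx2] Gx0]];
   [unfold opp_fct; lra | unfold opp_fct; lra |].
 unfold opp_fct in Gx0. assert (G0 : g x0 = 0) by lra. clear Gx0.
 assert (Hxb : x0 < b). { destruct (Rle_lt_or_eq_dec _ _ Hx2) as [h|h]; auto. subst. lra. }
 assert (Hax : a < x0). { destruct (Rle_lt_or_eq_dec _ _ Hx1) as [h|h]; auto. subst. lra. }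
 assert (Uniq : forall y, 0 < y <= 2 * PI -> g y = 0 -> y = x0).
 { intros y [Hy1 Hy2] Gy. destruct (Rtotal_order y x0) as [h|[h|h]]; auto.
   - exfalso. apply (uniq2 y x0); lra.
   - exfalso. apply (uniq2 x0 y); lra. }
 assert (GP : g PI > 0) by (rewrite gPI; nra).
 assert (G2P : g (2*PI) < 0) by (rewrite g2PI; nra).
 assert (Gpos : forall y, 0 < y <= x0 -> 0 <= g y).
 { intros y [Hy1 Hy2]. destruct (Rlt_or_le (g y) 0) as [h|h]; auto. exfalso.
   assert (PI < y). { destruct (Rlt_or_le PI y) as [h'|h']; auto. pose proof (g_pos y (conj Hy1 h')). lra. }
   destruct (IVT (opp_fct g) PI y contng H) as [z [[Hz1 Hz2] Gz]];
     [unfold opp_fct; lra | unfold opp_fct; lra |].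
   unfold opp_fct in Gz.
   assert (z < y). { destruct (Rle_lt_or_eq_dec _ _ Hz2) as [h'|h']; auto. subst. lra. }
   apply (uniq2 z x0); lra. }
 assert (Gneg : forall y, x0 <= y <= 2*PI -> g y <= 0).
 { intros y [Hy1 Hy2]. destruct (Rle_or_lt (g y) 0) as [h|h]; auto. exfalso.
   assert (x0 < y). { destruct (Rle_lt_or_eq_dec _ _ Hy1) as [h'|h']; auto. subst. lra. }
   assert (y < 2*PI). { destruct (Rle_lt_or_eq_dec _ _ Hy2) as [h'|h']; auto. rewrite h' in h. lra. }
   destruct (IVT (opp_fct g) y (2*PI) contng H0) as [z [[Hz1 Hz2] Gz]];
     [unfold opp_fct; lra | unfold opp_fct; lra |].
   unfold opp_fct in Gz.
   assert (y < z). { destruct (Rle_lt_or_eq_dec _ _ Hz1) as [h'|h']; auto. subst. lra. }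
   apply (uniq2 x0 z); lra. }
 assert (Dh : forall u v, 0 < u -> u < v -> exists c, hk v - hk u = g c / c^5 * (v - u) /\ u < c < v).
 { intros u v Hu Huv. apply (MVT_cor2 hk (fun x => g x / x^5) u v Huv).
   intros c Hc. apply D_hk. lra. }
 assert (H1 : forall y, 0 < y <= x0 -> hk y <= hk x0).
 { intros y [Hy1 Hy2]. destruct (Rle_lt_or_eq_dec _ _ Hy2) as [h|h]; [|subst; lra].
   destruct (Dh y x0 Hy1 h) as [c [E Hc]].
   assert (0 <= g c) by (apply Gpos; lra).
   assert (0 < c^5) by (apply pow_lt; lra).
   assert (0 <= g c / c^5) by (apply Rdiv_le_0_compat; lra).
   assert (0 <= g c / c^5 * (x0 - y)) by (apply Rmult_le_pos; lra). lra. }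
 assert (H2 : forall y, x0 <= y <= 2*PI -> hk y <= hk x0).
 { intros y [Hy1 Hy2]. destruct (Rle_lt_or_eq_dec _ _ Hy1) as [h|h]; [|subst; lra].
   destruct (Dh x0 y ltac:(lra) h) as [c [E Hc]].
   assert (g c <= 0) by (apply Gneg; lra).
   assert (0 < c^5) by (apply pow_lt; lra).
   assert (0 <= - g c / c^5) by (apply Rdiv_le_0_compat; lra).
   assert (0 <= - g c / c^5 * (y - x0)) by (apply Rmult_le_pos; lra).
   unfold Rdiv in *. lra. }
 assert (H3 : hk x0 <= hk a + 1/10000 * (1/1000000)).
 { destruct (Dh a x0 ltac:(lra) Hax) as [c [E Hc]].
   assert (0 <= g c) by (apply Gpos; lra).
   assert (g c <= g a).
   { destruct (MVT_cor2 g (fun x => x^2 * kk x) a c ltac:(lra) (fun c _ => D_g c)) as [d [E2 Hd]].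
     assert (kk d <= kk a) by (apply k_dec; lra).
     assert (0 <= d^2 * (- kk d) * (c - a)).
     { apply Rmult_le_pos; [apply Rmult_le_pos|]; try lra. apply pow2_ge_0. }
     lra. }
   assert (1 <= c^5). { rewrite <- (pow1 5). apply pow_incr. lra. }
   assert (g c / c^5 <= g c).
   { unfold Rdiv. rewrite <- (Rmult_1_r (g c)) at 2. apply Rmult_le_compat_l; auto.
     rewrite <- Rinv_1. apply Rinv_le_contravar; lra. }
   assert (0 <= g c / c^5) by (apply Rdiv_le_0_compat; lra).
   assert (x0 - a <= 1/1000000) by (unfold a, b in *; lra).
   assert (g c / c^5 * (x0 - a) <= 1/10000 * (1/1000000)).
   { apply Rmult_le_compat; lra. }
   lra. }
 assert (Ha4 : 0 < a^4) by (apply pow_lt; unfold a; lra).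
 assert (HA : (531551/1000000)^2 <= hk a /\ hk a + 1/10000 * (1/1000000) < (531552/1000000)^2).
 { unfold hk. split.
   - apply (Rmult_le_reg_r (a^4)); auto. unfold Rdiv. rewrite Rmult_assoc, Rinv_l by lra.
     unfold F2. unfold a in *. lra.
   - cut (F2 a < ((531552/1000000)^2 - 1/10000 * (1/1000000)) * a^4).
     { intro h. apply (Rmult_lt_reg_r (a^4)); auto. unfold Rdiv.
       rewrite Rmult_plus_distr_r, Rmult_assoc, Rinv_l by lra. lra. }
     unfold F2. unfold a in *. lra. }
 assert (HK1 : (531551/1000000)^2 <= hk x0) by (pose proof (H1 a ltac:(lra)); lra).
 assert (HK2 : hk x0 < (531552/1000000)^2) by lra.
 assert (Kap : kappa_at x0 = sqrt (hk x0)).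
 { unfold kappa_at, hk. rewrite Fsq_F2. assert (0 < x0^2) by (apply pow_lt; lra).
   rewrite sqrt_div_alt by (apply pow_lt; lra).
   replace (x0^4) with ((x0^2)^2) by ring. rewrite sqrt_pow2 by lra.
   unfold Rdiv. ring. }
 exists x0. split; [|split; [|split; [|split]]].
 - split; [lra|]. split; auto.
 - lra.
 - unfold a, b in *; lra.
 - rewrite Kap. split.
   + rewrite <- (sqrt_pow2 (531551/1000000)) by lra. apply sqrt_le_1_alt. lra.
   + rewrite <- (sqrt_pow2 (531552/1000000)) by lra. apply sqrt_lt_1_alt. split; [nra|lra].
 - intro x. rewrite cmod_eq, Kap.
   assert (Q : F2 x <= hk x0 * x^4).
   { assert (Qp : forall t, 0 <= t -> F2 t <= hk x0 * t^4).
     { intros t Ht. destruct (Rle_lt_or_eq_dec _ _ Ht) as [h|h].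
       - destruct (Rle_or_lt t (2*PI)) as [h'|h'].
         + assert (hk t <= hk x0).
           { destruct (Rle_or_lt t x0); [apply H1|apply H2]; lra. }
           assert (0 < t^4) by (apply pow_lt; lra).
           replace (F2 t) with (hk t * t^4) by (unfold hk; field; lra).
           apply Rmult_le_compat_r; lra.
         + apply big_t; lra.
       - subst. unfold F2. rewrite cos_0, sin_0. replace (hk x0 * 0^4) with 0 by ring. field_simplify. lra. }
     destruct (Rle_or_lt 0 x) as [h|h]; auto.
     rewrite <- F2_even. replace (x^4) with ((-x)^4) by ring. apply Qp. lra. }
   assert (0 <= hk x0) by nra.
   replace (sqrt (hk x0) * x^2) with (sqrt (hk x0 * x^4)).
   + apply sqrt_le_1_alt. auto.
   + rewrite sqrt_mult_alt by auto. replace (x^4) with ((x^2)^2) by ring.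
     rewrite sqrt_pow2 by (apply pow2_ge_0). reflexivity.
Qed.
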